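(* Assume conditions (C1) and (C2) hold, and suppose $p_n\ge0$, $\mu_n\ge 0$ with $\sum_n p_n<\infty$. Let $\{w_n\},\{y_n\}$ be generated by Algorithm 3.1. If $\lim_{n\to\infty}\|w_n-y_n\|=0$ and $\{w_n\}$ converges weakly to some $z\in H$, then $z\in\Omega$.
   Context: Let $H$ be a real Hilbert space, $A:H\to H$ a single-valued mapping and $B:H\to 2^H$ a set-valued mapping, and let $\Omega:=(A+B)^{-1}(0)=\{x\in H:\ 0\in Ax+Bx\}$. Algorithm 3.1 is the following iteration. Fix $x_0,x_1\in H$, $\mu\in(0,1)$, $\lambda_1>0$, real sequences $\{\alpha_n\},\{\beta_n\},\{\theta_n\}$ and nonnegative real sequences $\{\mu_n\},\{p_n\}$. For $n=1,2,\dots$ compute $w_n=x_n+\alpha_n(x_n-x_{n-1})$, $z_n=x_n+\beta_n(x_n-x_{n-1})$, $y_n=(I+\lambda_nB)^{-1}(I-\lambda_nA)w_n$, and set $\lambda_{n+1}=\min\{(\mu_n+\mu)\|w_n-y_n\|/\|Aw_n-Ay_n\|,\ \lambda_n+p_n\}$ if $Aw_n\neq Ay_n$, and $\lambda_{n+1}=\lambda_n+p_n$ otherwise. If $w_n=y_n$ the algorithm stops (then $y_n\in\Omega$). Otherwise set $x_{n+1}=(1-\theta_n)z_n+\theta_n\big(y_n-\lambda_n(Ay_n-Aw_n)\big)$ and continue. Here $I$ is the identity and $(I+\lambda B)^{-1}$ is the resolvent of $B$. Throughout, it is assumed that the algorithm does not stop, so that infinite sequences $\{x_n\},\{w_n\},\{z_n\},\{y_n\},\{\lambda_n\}$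 are generated. Condition (C1): $\Omega\neq\emptyset$. Condition (C2): $A$ is $L$-Lipschitz continuous and monotone, and $B$ is maximal monotone. *)

(* Defs.v *)
From HB Require Import structures.
From mathcomp Require Import all_boot all_order all_algebra.
From mathcomp Require Import all_classical all_reals all_analysis.
Set Implicit Arguments. Unset Strict Implicit. Unset Printing Implicit Defensive.
Import Order.TTheory GRing.Theory Num.Theory.
Import numFieldNormedType.Exports.
Local Open Scope classical_set_scope.
Local Open Scope ring_scope.

(* A real Hilbert space is modelled as a complete normed space H over R together
   with an inner product ip inducing its norm. *)
Record is_inner_product (R : realType) (H : completeNormedModType R)
  (ip : H -> H -> R) : Prop := {
  ip_sym : forall x y, ip x y = ip y x;
  ip_linl : forall (a : R) x y z, ip (a *: x + y) z = a * ip x z + ip y z;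
  ip_norm : forall x, ip x x = `|x| ^+ 2
}.

Section Ops.
Context {R : realType} {H : completeNormedModType R} (ip : H -> H -> R).

Definition lipschitz_with (L : R) (A : H -> H) : Prop :=
  forall x y, `|A x - A y| <= L * `|x - y|.

Definition monotone_op (A : H -> H) : Prop :=
  forall x y, 0 <= ip (A x - A y) (x - y).

Definition monotone_setop (B : H -> set H) : Prop :=
  forall x y u v, B x u -> B y v -> 0 <= ip (u - v) (x - y).

Definition maximal_monotone (B : H -> set H) : Prop :=
  monotone_setop B /\
  forall B' : H -> set H, monotone_setop B' ->
    (forall x, B x `<=` B' x) -> forall x, B' x = B x.

Definition resolvent_rel (B : H -> set H) (lam : R) (x y : H) : Prop :=
  exists u, B y u /\ x = y + lam *: u.

Definition zeros_sum (A : H -> H) (B : H -> set H) : set H :=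
  [set x | exists u, B x u /\ A x + u = 0].

Definition weakly_converges (w : nat -> H) (z : H) : Prop :=
  forall v, (fun n => ip (w n) v) @ \oo --> ip z v.
End Ops.

(* Main.v *)
Require Import Defs.
From HB Require Import structures.
From mathcomp Require Import all_boot all_order all_algebra.
From mathcomp Require Import all_classical all_reals all_analysis.
From mathcomp Require Import ring lra.
Import Order.TTheory GRing.Theory Num.Theory.
Import numFieldNormedType.Exports.
Local Open Scope classical_set_scope.
Local Open Scope ring_scope.
Section IP.
Context {R : realType} {H : completeNormedModType R} {ip : H -> H -> R}.
Hypothesis hip : is_inner_product ip.

Lemma ipDl x y z : ip (x + y) z = ip x z + ip y z.
Proof. by have := ip_linl hip 1 x y z; rewrite scale1r mul1r. Qed.
Lemma ip0l z : ip 0 z = 0.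
Proof. by apply: (@addrI _ (ip 0 z)); rewrite addr0 -ipDl addr0. Qed.
Lemma ipZl a x z : ip (a *: x) z = a * ip x z.
Proof. by rewrite -[a *: x]addr0 (ip_linl hip) ip0l addr0. Qed.
Lemma ipNl x z : ip (- x) z = - ip x z.
Proof. by rewrite -scaleN1r ipZl mulN1r. Qed.
Lemma ipBl x y z : ip (x - y) z = ip x z - ip y z.
Proof. by rewrite ipDl ipNl. Qed.
Lemma ipDr x y z : ip z (x + y) = ip z x + ip z y.
Proof. by rewrite (ip_sym hip) ipDl !(ip_sym hip z). Qed.
Lemma ipZr a x z : ip z (a *: x) = a * ip z x.
Proof. by rewrite (ip_sym hip) ipZl (ip_sym hip z). Qed.
Lemma ipNr x z : ip z (- x) = - ip z x.
Proof. by rewrite (ip_sym hip) ipNl (ip_sym hip z). Qed.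
Lemma ipBr x y z : ip z (x - y) = ip z x - ip z y.
Proof. by rewrite ipDr ipNr. Qed.
Lemma ip0r z : ip z 0 = 0.
Proof. by rewrite (ip_sym hip) ip0l. Qed.
Lemma ipxx x : ip x x = `|x| ^+ 2.
Proof. exact: (ip_norm hip). Qed.
Lemma ipxx_ge0 x : 0 <= ip x x.
Proof. by rewrite ipxx sqr_ge0. Qed.

Lemma CS x y : `|ip x y| <= `|x| * `|y|.
Proof.
have [x0|xn0] := eqVneq x 0.
  by rewrite x0 ip0l !normr0 mul0r.
have nx : 0 < `|x| by rewrite normr_gt0.
set t := ip x y / `|x| ^+ 2.
have h : 0 <= ip (t *: x - y) (t *: x - y) by apply: ipxx_ge0.
rewrite !ipBl !ipBr !ipZl !ipZr (ip_sym hip y x) !ipxx in h.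
have e : t * (t * `|x| ^+ 2) = ip x y ^+ 2 / `|x| ^+ 2.
  rewrite /t; field; by rewrite gt_eqF.
have h2 : ip x y ^+ 2 <= (`|x| * `|y|) ^+ 2.
  have : ip x y ^+ 2 / `|x| ^+ 2 <= `|y| ^+ 2.
    have e2 : t * ip x y = ip x y ^+ 2 / `|x| ^+ 2 by rewrite /t; field; rewrite gt_eqF.
    lra.
  rewrite ler_pdivrMr ?exprn_gt0 // => h3; by rewrite exprMn mulrC.
rewrite -real_normK ?num_real // in h2.
by rewrite -ler_sqr ?nnegrE ?mulr_ge0.
Qed.

Lemma ip_le x y : ip x y <= `|x| * `|y|.
Proof. exact: le_trans (ler_norm _) (CS x y). Qed.
Lemma ip_ge x y : - (`|x| * `|y|) <= ip x y.
Proof. by have := CS x y; rewrite ler_norml => /andP[]. Qed.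

End IP.
Section Bnd.
Context {R : realType} {H : completeNormedModType R} (ip : H -> H -> R).
Hypothesis hip : is_inner_product ip.

Lemma weak_bounded (w : nat -> H) z : weakly_converges ip w z ->
  exists M, forall n, `|w n| <= M.
Proof.
move=> wc.
pose F : set (H -> R^o) := [set f | exists n, f = (fun v => ip (w n) v : R^o)].
have BS := @Banach_Steinhauss R H R^o F.
have h1 : forall f, F f -> bounded_fun_norm f /\ linear f.
  move=> f [n ->]; split.
    move=> r; exists (`|w n| * r) => v vr.
    rewrite /=; apply: le_trans (CS hip (w n) v) _; exact: ler_wpM2l.
  by move=> a u v; rewrite /= (ipDr hip) (ipZr hip).
have h2 : pointwise_bounded F.
  move=> v.
  have cv : cvgn (fun n => ip (w n) v) by apply/cvg_ex; exists (ip z v); exact: wc.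
  have := cvg_seq_bounded cv.
  move=> [M0 [_ hM0]]; exists (M0 + 1) => f [n ->] /=.
  by apply: (hM0 (M0 + 1)) => //; rewrite ltrDl.
have [K hK] := BS h1 h2 1; exists K => n.
  have [w0|wn0] := eqVneq (w n) 0.
    rewrite w0 normr0; apply: le_trans (hK (fun v => ip (w n) v) _ 0 _) => //.
    by exists n. by rewrite normr0.
  have nw : 0 < `|w n| by rewrite normr_gt0.
  have := hK (fun v => ip (w n) v) (ex_intro _ n erefl) (`|w n|^-1 *: w n).
  rewrite normrZ ger0_norm ?invr_ge0 // mulVf ?gt_eqF // lexx => /(_ isT).
  rewrite /= (ipZr hip) (ipxx hip) ger0_norm; last by rewrite mulr_ge0 ?invr_ge0 ?sqr_ge0.
  by rewrite expr2 mulrA mulVf ?gt_eqF // mul1r.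
Qed.
End Bnd.
Lemma le_of_inv {R : realType} (x m : R) :
  (forall N : nat, x <= m + (N.+1%:R)^-1) -> x <= m.
Proof.
move=> h; rewrite leNgt; apply/negP => hlt.
have d0 : 0 < x - m by rewrite subr_gt0.
pose N := Num.truncn ((x - m)^-1).
have := h N; have : (N.+1%:R)^-1 < x - m.
  by rewrite -ltf_pV2 ?(posrE,invr_gt0)// invrK truncnS_gt.
move: (N.+1%:R)^-1 => i a b; lra.
Qed.

Lemma quad_ge0 {R : realType} (C D : R) : 0 <= D ->
  (forall t, 0 < t <= 1 -> 0 <= t * C + t ^+ 2 * D) -> 0 <= C.
Proof.
move=> D0 h; rewrite leNgt; apply/negP => C0.
pose t := - C / (D - C).
have t0 : 0 < t by rewrite /t divr_gt0 // ?oppr_gt0 // subr_gt0; lra.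
have t1 : t <= 1 by rewrite /t ler_pdivrMr; lra.
have := h t; rewrite t0 t1 => /(_ isT).
have -> : t * C + t ^+ 2 * D = t * (C + t * D) by rewrite expr2; ring.
rewrite pmulr_rge0 //.
have hDC : 0 < D - C by lra.
have -> : C + t * D = - C ^+ 2 / (D - C) by rewrite /t; field; rewrite gt_eqF.
have c2 : 0 < C ^+ 2 by rewrite expr2 nmulr_rgt0.
have : 0 < C ^+ 2 / (D - C) by rewrite divr_gt0.
rewrite mulNr; move: (C ^+ 2 / (D - C)) => q; lra.
Qed.
Definition phi {R : realType} {H : completeNormedModType R} (ip : H -> H -> R) (a a' p1 p2 : H) :=
  ip p1 a' + ip a p2 - ip a a' + (`|p1| ^+ 2 + `|p2| ^+ 2) / 2.
Section Cont.
Context {R : realType} {H : completeNormedModType R} {ip : H -> H -> R}.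
Hypothesis hip : is_inner_product ip.

Lemma ip_cvgl (f : nat -> H) x c : f @ \oo --> x ->
  (fun k => ip (f k) c) @ \oo --> ip x c.
Proof.
move=> fx; apply/cvgrPdist_lt => e e0.
have e1 : 0 < e / (`|c| + 1) by rewrite divr_gt0 // ltr_pwDr.
move/cvgrPdist_lt: fx => /(_ _ e1) hf.
apply: filterS hf => k hk.
rewrite -(ipBl hip); apply: le_lt_trans (CS hip _ _) _.
have c1 : 0 < `|c| + 1 by rewrite ltr_pwDr.
apply: (@le_lt_trans _ _ (e / (`|c| + 1) * `|c|)).
  by apply: ler_wpM2r => //; apply: ltW.
by rewrite mulrAC ltr_pdivrMr // ltr_pM2l // ltrDl.
Qed.

Lemma ip_cvgr (f : nat -> H) x c : f @ \oo --> x ->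
  (fun k => ip c (f k)) @ \oo --> ip c x.
Proof.
move=> fx; rewrite (ip_sym hip); under eq_fun do rewrite (ip_sym hip).
exact: ip_cvgl.
Qed.

Lemma sqn_cvg (f : nat -> H) x : f @ \oo --> x ->
  (fun k => `|f k| ^+ 2) @ \oo --> `|x| ^+ 2.
Proof.
move=> fx; rewrite expr2; under eq_fun do rewrite expr2.
by apply: cvgM; apply: cvg_norm.
Qed.

Lemma phi_cvg a a' (f1 f2 : nat -> H) x1 x2 : f1 @ \oo --> x1 -> f2 @ \oo --> x2 ->
  (fun k => phi ip a a' (f1 k) (f2 k)) @ \oo --> phi ip a a' x1 x2.
Proof.
move=> c1 c2; rewrite /phi.
apply: cvgD; last apply: cvgMr_tmp; last by apply: cvgD; apply: sqn_cvg.
apply: cvgB; last exact: cvg_cst.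
by apply: cvgD; [apply: ip_cvgl | apply: ip_cvgr].
Qed.

End Cont.
Section Minty.
Context {R : realType} {H : completeNormedModType R} {ip : H -> H -> R}.
Hypothesis hip : is_inner_product ip.
Variable S : H -> H -> Prop.
Hypothesis Smono : forall a a' b b', S a a' -> S b b' -> 0 <= ip (a' - b') (a - b).
Hypothesis Sne : exists a a', S a a'.

Let E := [set c | exists p1 p2, forall a a', S a a' -> phi ip a a' p1 p2 <= c].
Let m := inf E.

Let E_ne : E !=set0.
Proof.
case: Sne => a0 [a0' s0].
exists (ip a0 a0' + (`|a0| ^+ 2 + `|a0'| ^+ 2) / 2), a0, a0' => a a' s.
have := Smono _ _ _ _ s0 s; rewrite /phi (ipBl hip) !(ipBr hip).
have := ip_sym hip a0' a0; have := ip_sym hip a0' a; have := ip_sym hip a' a0; have := ip_sym hip a' a; lra.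
Qed.

Let E_lb : has_lbound E.
Proof.
case: Sne => a0 [a0' s0].
exists (- (`|a0| ^+ 2 + `|a0'| ^+ 2) / 2 - ip a0 a0') => c [p1 [p2 hp]].
have := hp _ _ s0; rewrite /phi.
have h1 := ipxx_ge0 hip (p1 + a0'); have h2 := ipxx_ge0 hip (p2 + a0).
rewrite !(ipDl hip) !(ipDr hip) !(ipxx hip) in h1 h2.
have := ip_sym hip p1 a0'; have := ip_sym hip p2 a0; have := ip_sym hip a0 p2.
lra.
Qed.

Let m_le c : E c -> m <= c.
Proof. by move=> Ec; apply: ge_inf. Qed.

Let near_m p1 p2 eps : 0 < eps ->
  exists a a', S a a' /\ m - eps < phi ip a a' p1 p2.
Proof.
move=> e0; apply/not_existsP => hn.
have : E (m - eps).
  exists p1, p2 => a a' s; rewrite leNgt; apply/negP => hlt.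
  by apply: (hn a); exists a'; split.
by move/m_le; lra.
Qed.

Lemma phi_mid a a' x1 x2 y1 y2 :
  phi ip a a' ((1/2) *: (x1 + y1)) ((1/2) *: (x2 + y2)) =
  (phi ip a a' x1 x2 + phi ip a a' y1 y2) / 2
    - (`|x1 - y1| ^+ 2 + `|x2 - y2| ^+ 2) / 8.
Proof.
rewrite /phi -!(ipxx hip).
rewrite !(ipZl hip, ipZr hip, ipDl hip, ipDr hip, ipNl hip, ipNr hip).
have := ip_sym hip x1 y1; have := ip_sym hip x2 y2; lra.
Qed.


Let has_infE : has_inf E := conj E_ne E_lb.

Let minseq : exists P : nat -> H * H, forall k a a', S a a' ->
  phi ip a a' (P k).1 (P k).2 <= m + (k.+1%:R)^-1.
Proof.
suff h : forall k, exists p : H * H, forall a a', S a a' ->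
  phi ip a a' p.1 p.2 <= m + (k.+1%:R)^-1.
  by have [P hP] := choice h; exists P.
move=> k.
have ek : 0 < (k.+1%:R)^-1 :> R by rewrite invr_gt0.
have [c [p1 [p2 hp]] hc] := @inf_adherent R E _ ek has_infE.
by exists (p1, p2) => a a' s; apply: le_trans (hp _ _ s) (ltW hc).
Qed.

Let seq_cvg (f : nat -> H) :
  (forall k l, `|f k - f l| ^+ 2 <= 4 * ((k.+1%:R)^-1 + (l.+1%:R)^-1)) ->
  cvgn f.
Proof.
move=> hf.
suff : cauchy (f @ \oo) by exact: cauchy_cvg.
suff : cauchy_ex (f @ \oo) by exact: cauchy_exP.
move=> eps eps0; rewrite /fmapE -ball_normE /ball_.
pose N := Num.truncn (8 / eps ^+ 2).
have e2 : 0 < eps ^+ 2 by rewrite exprn_gt0.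
have eN : (N.+1%:R)^-1 < eps ^+ 2 / 8.
  rewrite -ltf_pV2 ?(posrE,invr_gt0, divr_gt0)// invrK invf_div.
  exact: truncnS_gt.
exists (f N), N => // k Nk /=.
have hk : (k.+1%:R)^-1 <= (N.+1%:R)^-1 :> R.
  by rewrite lef_pV2 ?posrE // ler_nat.
have := hf N k.
move: ((k.+1%:R)^-1 : R) ((N.+1%:R)^-1 : R) hk eN => ik iN hk eN h.
have h2 : `|f N - f k| ^+ 2 < eps ^+ 2 by lra.
by rewrite -(ltr_pXn2r (_ : (0 < 2)%N)) ?nnegrE // ltW.
Qed.

Lemma minty_core : exists u, forall a a', S a a' -> 0 <= ip (a' + u) (a - u).
Proof.
have [P hP] := minseq.
have cau k l : `|(P k).1 - (P l).1| ^+ 2 + `|(P k).2 - (P l).2| ^+ 2 <=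
    4 * ((k.+1%:R)^-1 + (l.+1%:R)^-1).
  rewrite leNgt; apply/negP => hlt.
  have pos : 0 < ((`|(P k).1 - (P l).1| ^+ 2 + `|(P k).2 - (P l).2| ^+ 2) -
     4 * ((k.+1%:R)^-1 + (l.+1%:R)^-1)) / 8 by rewrite divr_gt0 // subr_gt0.
  have [a [a' [s hs]]] := near_m ((1/2) *: ((P k).1 + (P l).1))
     ((1/2) *: ((P k).2 + (P l).2)) _ pos.
  rewrite phi_mid in hs.
  have := hP k a a' s; have := hP l a a' s.
  move: ((k.+1%:R)^-1 : R) ((l.+1%:R)^-1 : R) hlt hs pos => ik il.
  lra.
have cv1 : cvgn (fun k => (P k).1).
  apply: seq_cvg => k l; apply: le_trans (cau k l).
  by rewrite lerDl sqr_ge0.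
have cv2 : cvgn (fun k => (P k).2).
  apply: seq_cvg => k l; apply: le_trans (cau k l).
  by rewrite lerDr sqr_ge0.
set X1 := limn (fun k => (P k).1) in cv1.
set X2 := limn (fun k => (P k).2) in cv2.
have l1 : (fun k => (P k).1) @ \oo --> X1 by exact: cv1.
have l2 : (fun k => (P k).2) @ \oo --> X2 by exact: cv2.
have phiX a a' : S a a' -> phi ip a a' X1 X2 <= m.
  move=> s; apply: le_of_inv => N.
  apply: (cvgr_to_le (phi_cvg hip a a' _ _ _ _ l1 l2)).
  exists N => // k /= Nk; apply: le_trans (hP k a a' s) _.
  by rewrite lerD2l lef_pV2 ?posrE // ler_nat.
exists ((1/2) *: (X1 - X2)) => b b' sb.
pose NX := `|X1| ^+ 2 + `|X2| ^+ 2.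
pose G := ip X1 (b - X1) + ip X2 (b' - X2).
pose D := `|b - X1| ^+ 2 + `|b' - X2| ^+ 2.
have C0 : 0 <= - m + NX / 2 + ip b b' + G.
  apply: (@quad_ge0 _ _ (D / 2)).
    by rewrite divr_ge0 // addr_ge0 // sqr_ge0.
  move=> t /andP[t0 t1].
  pose Q1 := X1 + t *: (b - X1); pose Q2 := X2 + t *: (b' - X2).
  have NQ : `|Q1| ^+ 2 + `|Q2| ^+ 2 = NX + 2 * t * G + t ^+ 2 * D.
    rewrite /Q1 /Q2 /NX /G /D -!(ipxx hip).
    rewrite !(ipZl hip, ipZr hip, ipDl hip, ipDr hip, ipNl hip, ipNr hip).
    have := ip_sym hip X1 b; have := ip_sym hip X2 b'.
    move=> e1 e2; rewrite e1 e2; ring.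
  have cl : m <= (1 - t) * (m - NX / 2) + t * ip b b' + (`|Q1| ^+ 2 + `|Q2| ^+ 2) / 2.
    rewrite leNgt; apply/negP => hlt.
    have pos : 0 < m - ((1 - t) * (m - NX / 2) + t * ip b b' + (`|Q1| ^+ 2 + `|Q2| ^+ 2) / 2) by rewrite subr_gt0.
    have [a [a' [s hs]]] := near_m Q1 Q2 _ pos.
    have h1 := phiX a a' s.
    have h2 := Smono _ _ _ _ s sb.
    rewrite (ipBl hip) !(ipBr hip) in h2.
    have i1 : (1 - t) * (ip X1 a' + ip a X2 - ip a a') <= (1 - t) * (m - NX / 2).
      have t1' : 0 <= 1 - t by lra.
      by apply: (ler_wpM2l t1'); rewrite /phi in h1; rewrite /NX; lra.
    have i2 : t * (ip b a' + ip a b' - ip a a') <= t * ip b b'.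
      have t0' : 0 <= t by lra.
      apply: (ler_wpM2l t0').
      have := ip_sym hip a' a; have := ip_sym hip a' b; have := ip_sym hip b' a;
      have := ip_sym hip b' b; lra.
    move: hs; rewrite /phi /Q1 /Q2.
    rewrite !(ipZl hip, ipZr hip, ipDl hip, ipDr hip, ipNl hip, ipNr hip).
    move: hlt; rewrite /Q1 /Q2; lra.
  rewrite NQ in cl; lra.
have hb := phiX b b' sb.
rewrite /phi in hb.
have hs := ipxx_ge0 hip (X1 + X2).
move: C0 hb hs; rewrite /NX /G -!(ipxx hip).
rewrite !(ipZl hip, ipZr hip, ipDl hip, ipDr hip, ipNl hip, ipNr hip).
have := ip_sym hip b' b; have := ip_sym hip b' X1; have := ip_sym hip b' X2;
have := ip_sym hip X2 b; have := ip_sym hip X1 X2; have := ip_sym hip X1 b.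
lra.
Qed.

End Minty.
Section Res.
Context {R : realType} {H : completeNormedModType R} {ip : H -> H -> R}.
Hypothesis hip : is_inner_product ip.
Variable B : H -> set H.

Lemma resolvent_exists lam x : maximal_monotone ip B -> 0 < lam ->
  exists y, resolvent_rel B lam x y.
Proof.
move=> [Bmono Bmax] l0.
have Bne : exists a a', B a a'.
  apply/not_existsP => hn.
  pose B' : H -> set H := fun q => [set v | q = 0 /\ v = 0].
  have mB' : monotone_setop ip B'.
    by move=> a b u v [-> ->] [-> ->]; rewrite subrr ip0l.
  have sub : forall q, B q `<=` B' q by move=> q v hv; exfalso; apply: (hn q); exists v.
  have := Bmax B' mB' sub 0.
  move=> e; have : B' 0 0 by [].
  by rewrite e => h0; apply: (hn 0); exists 0.
pose S a a' := exists b b', B b b' /\ a = b - x /\ a' = lam *: b'.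
have Smono : forall a a' b b', S a a' -> S b b' -> 0 <= ip (a' - b') (a - b).
  move=> a a' b b' [b1 [b1' [h1 [-> ->]]]] [b2 [b2' [h2 [-> ->]]]].
  rewrite -scalerBr (ipZl hip) opprB addrA subrK.
  by apply: mulr_ge0; [apply: ltW | apply: Bmono].
have Sne : exists a a', S a a'.
  by case: Bne => a [a' h]; exists (a - x), (lam *: a'), a, a'.
have [u hu] := @minty_core _ _ _ hip S Smono Sne.
pose y := x + u; pose c := - (lam^-1 *: u).
have lc : lam *: c = - u by rewrite /c scalerN scalerA mulfV ?gt_eqF // scale1r.
have key : forall p v, B p v -> 0 <= ip (v - c) (p - y).
  move=> p v hv.
  have := hu (p - x) (lam *: v) (ex_intro _ p (ex_intro _ v (conj hv (conj erefl erefl)))).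
  have -> : lam *: v + u = lam *: (v - c) by rewrite scalerBr lc opprK.
  have -> : p - x - u = p - y by rewrite /y opprD addrA.
  by rewrite (ipZl hip) pmulr_rge0.
pose B' : H -> set H := fun q => [set v | B q v \/ (q = y /\ v = c)].
have mB' : monotone_setop ip B'.
  move=> a b v1 v2 [h1|[-> ->]] [h2|[-> ->]].
  - exact: Bmono.
  - exact: key.
  - by rewrite -opprB -(opprB b) (ipNl hip) (ipNr hip) opprK; apply: key.
  - by rewrite subrr ip0l.
have sub : forall q, B q `<=` B' q by move=> q v hv; left.
have e := Bmax B' mB' sub y.
have : B' y c by right.
rewrite e => Byc; exists y, c; split => //.
by rewrite lc /y addrK.
Qed.

Lemma res_nonexp lam x1 x2 y1 y2 : monotone_setop ip B -> 0 < lam ->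
  resolvent_rel B lam x1 y1 -> resolvent_rel B lam x2 y2 -> `|y1 - y2| <= `|x1 - x2|.
Proof.
move=> Bm l0 [c1 [h1 ->]] [c2 [h2 ->]].
have m0 := Bm _ _ _ _ h1 h2.
have e : y1 + lam *: c1 - (y2 + lam *: c2) = (y1 - y2) + lam *: (c1 - c2).
  by rewrite scalerBr opprD !addrA; congr (_ + _); rewrite -!addrA; congr (_ + _); rewrite addrC.
rewrite e.
set d := y1 - y2.
have h : `|d| ^+ 2 <= `|d + lam *: (c1 - c2)| * `|d|.
  apply: le_trans (ip_le hip _ _).
  rewrite (ipDl hip) (ipZl hip) (ipxx hip) lerDl.
  by apply: mulr_ge0 => //; apply: ltW.
have [d0|dn0] := eqVneq `|d| 0; first by rewrite d0.
have dp : 0 < `|d| by rewrite lt_neqAle eq_sym dn0 normr_ge0.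
by rewrite expr2 ler_pM2r in h.
Qed.
End Res.
Lemma fixpt {R : realType} {H : completeNormedModType R} (T : H -> H) :
  (forall u v, `|T u - T v| <= 2^-1 * `|u - v|) -> exists u, u = T u.
Proof.
move=> hT.
have q0 : 0 <= (2^-1 : R) by rewrite invr_ge0.
have hc : is_contraction (totalfun T : {fun [set: H] >-> [set: H]}).
  exists (NngNum q0); split => /=.
    by rewrite invf_lt1 // ltr1n.
  move=> [u v] /= _. exact: hT.
have [u _ hu] := banach_fixed_point hc (@closedT _) (ex_intro _ 0 I).
by exists u.
Qed.

Section Fin.
Context {R : realType} {H : completeNormedModType R} {ip : H -> H -> R}.
Hypothesis hip : is_inner_product ip.

Lemma sum_zero (A : H -> H) (B : H -> set H) L z :
  lipschitz_with L A -> maximal_monotone ip B ->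
  (forall u v, B u v -> 0 <= ip (v + A u) (u - z)) -> zeros_sum A B z.
Proof.
move=> hL hB hP.
pose K := Num.max L 1.
have K1 : 1 <= K by rewrite le_max lexx orbT.
have LK : L <= K by rewrite le_max lexx.
have K0 : 0 < K by apply: lt_le_trans ltr01 K1.
pose lam := (2 * K)^-1.
have l0 : 0 < lam by rewrite invr_gt0 mulr_gt0.
have hJ : forall x, exists y, resolvent_rel B lam x y.
  by move=> x; exact: (resolvent_exists hip B lam x hB l0).
have [J hJ'] := choice hJ.
pose T u := J (z - lam *: A u).
have hT : forall u v, `|T u - T v| <= 2^-1 * `|u - v|.
  move=> u v; apply: le_trans (res_nonexp hip B lam _ _ _ _ hB.1 l0 (hJ' _) (hJ' _)) _.
  have -> : z - lam *: A u - (z - lam *: A v) = lam *: (A v - A u).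
    by rewrite scalerBr opprB addrC addrA subrK.
  rewrite normrZ (ger0_norm (ltW l0)) (distrC (A v)).
  apply: le_trans (ler_wpM2l (ltW l0) (hL u v)) _.
  have d0 := normr_ge0 (u - v).
  have : L * `|u - v| <= K * `|u - v| by apply: ler_wpM2r.
  have -> : 2^-1 * `|u - v| = lam * (K * `|u - v|).
    by rewrite /lam invfM mulrA -(mulrA _ _ K) mulVf ?gt_eqF // mulr1.
  by move=> h; apply: ler_wpM2l => //; apply: ltW.
have [u hu] := @fixpt _ _ T hT.
have := hJ' (z - lam *: A u); rewrite -/(T u) -hu => -[c [Bc e]].
have hc : c + A u = lam^-1 *: (z - u).
  have ez : z = u + lam *: c + lam *: A u by rewrite -e subrK.
  have ezu : z - u = lam *: (c + A u).
    by apply/eqP; rewrite subr_eq ez scalerDr [X in _ == X]addrC addrA.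
  by rewrite ezu scalerA mulVf ?gt_eqF // scale1r.
have := hP u c Bc.
rewrite hc (ipZl hip) -opprB (ipNl hip) (ipxx hip) mulrN oppr_ge0.
rewrite pmulr_rle0 ?invr_gt0 ?mulr_gt0 // => h.
have zu : z = u.
  have h2 : `|u - z| ^+ 2 == 0 by rewrite eq_le h sqr_ge0.
  by move: h2; rewrite expf_eq0 /= normr_eq0 subr_eq0 => /eqP.
rewrite zu; exists c; split => //.
by rewrite addrC hc zu subrr scaler0.
Qed.
End Fin.
Section Main.
Context {R : realType} {H : completeNormedModType R} {ip : H -> H -> R}.
Hypothesis hip : is_inner_product ip.

Lemma limit_ineq (A : H -> H) (B : H -> set H) (L c M : R) (w y : nat -> H)
  (lam : nat -> R) (zlim : H) :
  lipschitz_with L A -> monotone_op ip A -> monotone_setop ip B ->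
  0 < c -> (forall n, (1 <= n)%N -> c <= lam n) ->
  (forall n, `|w n| <= M) ->
  (forall n, (1 <= n)%N ->
     resolvent_rel B (lam n) (w n - lam n *: A (w n)) (y n)) ->
  (fun n => `|w n - y n|) @ \oo --> 0 ->
  weakly_converges ip w zlim ->
  forall u v, B u v -> 0 <= ip (v + A u) (u - zlim).
Proof.
move=> hL hAm hBm c0 hc hM hy hd hwc u v Buv.
pose K := Num.max L 1.
have K1 : 1 <= K by rewrite le_max lexx orbT.
have LK : L <= K by rewrite le_max lexx.
have K0 : 0 < K by apply: lt_le_trans ltr01 K1.
set g := v + A u.
pose Kc := `|g| + (c^-1 + K) * (`|u| + M + 1).
have c1 : (fun n => ip g (u - w n)) @ \oo --> ip g (u - zlim).
  rewrite (ipBr hip); under eq_fun do rewrite (ipBr hip).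
  apply: cvgB; first exact: cvg_cst.
  rewrite (ip_sym hip); under eq_fun do rewrite (ip_sym hip).
  exact: hwc.
have c2 : (fun n => Kc * `|w n - y n|) @ \oo --> 0.
  have := @cvgMl_tmp _ _ _ _ _ Kc _ hd; rewrite mulr0; exact.
have cF : (fun n => ip g (u - w n) + Kc * `|w n - y n|) @ \oo --> ip g (u - zlim) + 0.
  by apply: cvgD.
rewrite addr0 in cF.
apply: (cvgr_to_ge cF).
have ev1 : \forall n \near \oo, (1 <= n)%N by exists 1%N.
have ev2 : \forall n \near \oo, `|w n - y n| <= 1.
  move: (hd) => /cvgr_dist_le /(_ _ ltr01).
  by apply: filterS => n; rewrite sub0r normrN normr_id.
apply: filterS2 ev1 ev2 => n n1 dn1 /=.
set d := w n - y n.
have [b [Bb e]] := hy n n1.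
have ln := hc n n1.
have lp : 0 < lam n by apply: lt_le_trans c0 ln.
pose en := b + A (y n).
have hen : en = (lam n)^-1 *: d + (A (y n) - A (w n)).
  have eb : lam n *: b = d - lam n *: A (w n).
    by rewrite /d addrAC e (addrC (y n)) addrK.
  rewrite /en.
  have -> : b = (lam n)^-1 *: (lam n *: b) by rewrite scalerA mulVf ?gt_eqF // scale1r.
  rewrite eb scalerBr scalerA mulVf ?gt_eqF // scale1r.
  by rewrite -addrA (addrC (- A (w n))).
have nen : `|en| <= (c^-1 + K) * `|d|.
  rewrite hen; apply: le_trans (ler_normD _ _) _.
  have li : 0 <= (lam n)^-1 by rewrite invr_ge0 ltW.
  rewrite normrZ (ger0_norm li) mulrDl.
  apply: lerD.
    by apply: ler_wpM2r => //; rewrite lef_pV2 ?posrE.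
  apply: le_trans (hL _ _) _; rewrite distrC -/d.
  by apply: ler_wpM2r.
have nuy : `|u - y n| <= `|u| + M + 1.
  have -> : u - y n = u - w n + d by rewrite /d addrA subrK.
  apply: le_trans (ler_normD _ _) _; apply: lerD => //.
  apply: le_trans (ler_normB _ _) _; apply: lerD => //.
have mono : 0 <= ip (g - en) (u - y n).
  have h1 := hBm _ _ _ _ Buv Bb.
  have h2 := hAm u (y n).
  have -> : g - en = (v - b) + (A u - A (y n)).
    rewrite /g /en opprD !addrA; congr (_ + _).
    by rewrite -!addrA; congr (_ + _); rewrite addrC.
  by rewrite (ipDl hip) addr_ge0.
rewrite (ipBl hip) subr_ge0 in mono.
have h3 := ip_ge hip en (u - y n).
have h4 : `|en| * `|u - y n| <= (c^-1 + K) * `|d| * (`|u| + M + 1).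
  by apply: ler_pM => //.
have h5 : ip g (u - y n) <= ip g (u - w n) + `|g| * `|d|.
  have -> : u - y n = (u - w n) + d by rewrite /d addrA subrK.
  by rewrite (ipDr hip) lerD2l ip_le.
have h6 : 0 <= `|d| := normr_ge0 d.
rewrite /Kc.
move: (`|d|) h4 h5 h6 => dd h4 h5 h6.
nra.
Qed.
End Main.
Theorem lemma3p3 (R : realType) (H : completeNormedModType R)
  (ip : H -> H -> R) (A : H -> H) (B : H -> set H) (L : R)
  (mu lam1 : R) (alpha beta theta mus p : nat -> R)
  (x w z y : nat -> H) (lam : nat -> R) (zlim : H) :
  is_inner_product ip ->
  (* (C1) *) zeros_sum A B !=set0 ->
  (* (C2) *) lipschitz_with L A -> monotone_op ip A -> maximal_monotone ip B ->
  0 < mu < 1 -> 0 < lam1 ->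
  (forall n, 0 <= p n) -> (forall n, 0 <= mus n) ->
  cvg (series p @ \oo) ->
  (* Algorithm 3.1 *)
  lam 1%N = lam1 ->
  (forall n, (1 <= n)%N -> w n = x n + alpha n *: (x n - x n.-1)) ->
  (forall n, (1 <= n)%N -> z n = x n + beta n *: (x n - x n.-1)) ->
  (forall n, (1 <= n)%N ->
     resolvent_rel B (lam n) (w n - lam n *: A (w n)) (y n)) ->
  (forall n, (1 <= n)%N ->
     lam n.+1 = if A (w n) != A (y n) then
       Num.min ((mus n + mu) * `|w n - y n| / `|A (w n) - A (y n)|) (lam n + p n)
     else lam n + p n) ->
  (* the algorithm does not stop *)
  (forall n, (1 <= n)%N -> w n != y n) ->
  (forall n, (1 <= n)%N ->
     x n.+1 = (1 - theta n) *: z n + theta n *: (y n - lam n *: (A (y n) - A (w n)))) ->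
  (* hypotheses of the lemma *)
  (fun n => `|w n - y n|) @ \oo --> 0 ->
  weakly_converges ip w zlim ->
  zeros_sum A B zlim.
Proof.
move=> hip _ hL hAm hB /andP[mu0 _] l10 hp hmus _ hl1 _ _ hy hlam hne _ hd hwc.
apply: (sum_zero hip A B L zlim hL hB).
pose K := Num.max L 1.
have K1 : 1 <= K by rewrite le_max lexx orbT.
have LK : L <= K by rewrite le_max lexx.
have K0 : 0 < K by apply: lt_le_trans ltr01 K1.
pose c := Num.min lam1 (mu / K).
have c0 : 0 < c by rewrite lt_min l10 divr_gt0.
have hc : forall n, (1 <= n)%N -> c <= lam n.
  elim => [//|n IH] _.
  case: n IH => [_|n IH]; first by rewrite hl1 ge_min lexx.
  have ln := IH isT.
  have lnp : c <= lam n.+1 + p n.+1 by apply: le_trans ln _; rewrite lerDl.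
  rewrite hlam //; case: ifP => // hA.
  rewrite le_min lnp andbT.
  have an : 0 < `|w n.+1 - y n.+1| by rewrite normr_gt0 subr_eq0 hne.
  have bn : 0 < `|A (w n.+1) - A (y n.+1)| by rewrite normr_gt0 subr_eq0.
  have hb := hL (w n.+1) (y n.+1).
  apply: (@le_trans _ _ (mu / K)); first by rewrite ge_min lexx orbT.
  rewrite ler_pdivlMr //.
  have bK : `|A (w n.+1) - A (y n.+1)| <= K * `|w n.+1 - y n.+1|.
    by apply: le_trans hb _; apply: ler_wpM2r => //; apply: ltW.
  have mK : 0 <= mu / K by rewrite divr_ge0 // ltW.
  apply: le_trans (ler_wpM2l mK bK) _.
  rewrite mulrA divfK ?gt_eqF //.
  by apply: ler_wpM2r; [apply: ltW | rewrite lerDr hmus].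
have [M hM] := @weak_bounded _ _ ip hip w zlim hwc.
exact: (limit_ineq hip _ _ _ _ _ _ _ _ _ hL hAm hB.1 c0 hc hM hy hd hwc).
Qed.
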